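(* Let $p_0\ge 2$ be a real number, $\theta=\pi/p_0$, let $N$ be an even positive integer, $u\in\mathbb{C}$, $m\in\{0,1,\dots,N/2\}$, and let $\omega_1,\dots,\omega_m$ be a solution of the Bethe ansatz equations $$-\Biggl(\frac{\sinh\frac{\theta}{2}\bigl(\omega_j+i(u+2)\bigr)\sinh\frac{\theta}{2}(\omega_j-iu)}{\sinh\frac{\theta}{2}\bigl(\omega_j-i(u+2)\bigr)\sinh\frac{\theta}{2}(\omega_j+iu)}\Biggr)^{N/2}=\frac{Q(\omega_j+2i)}{Q(\omega_j-2i)},\qquad j=1,\dots,m,$$ where $Q(v)=\prod_{k=1}^m\sinh\frac{\theta}{2}(v-\omega_k)$. For integers $n\ge 0$ define the meromorphic function of $v$ $$T_{n-1}(v)=\sum_{j=1}^{n}\phi\bigl(v-i(u+n+2-2j)\bigr)\,\phi\bigl(v+i(u-n+2j)\bigr)\,\frac{Q(v+in)\,Q(v-in)}{Q\bigl(v+i(2j-n)\bigr)\,Q\bigl(v+i(2j-n-2)\bigr)},\qquad \phi(v)=\Bigl(\frac{\sinh\frac{\theta}{2}v}{\sin\theta}\Bigr)^{N/2}$$ (so $T_{-1}\equiv 0$). Then for all integers $n\ge y\ge 1$ and all $v\in\mathbb{C}$ (as an identity of meromorphic functions) $$T_{n-1}(v+iy)\,T_{n-1}(v-iy)=T_{n+y-1}(v)\,T_{n-y-1}(v)+T_{y-1}(v+in)\,T_{y-1}(v-in).$$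
   Context: These $T_{n-1}(v)$ (with the dependence on $u$ suppressed) are the eigenvalues, in dressed vacuum form, of the fusion hierarchy of quantum transfer matrices of the six-vertex model associated with the spin-$\frac12$ XXZ chain with anisotropy $\Delta=\cos\theta$; here $\sinh$ denotes the hyperbolic sine. *)

(* Defs.v *)
From Stdlib Require Import Reals Arith.
From Coquelicot Require Import Coquelicot.
Open Scope R_scope.

Definition Cexp (z : C) : C := (exp (Re z) * cos (Im z), exp (Re z) * sin (Im z)).

Definition Csinh (z : C) : C := ((Cexp z - Cexp (- z)) / 2)%C.

Fixpoint Csum1 (n : nat) (f : nat -> C) : C :=
  match n with O => RtoC 0 | S n' => (Csum1 n' f + f n)%C end.
Fixpoint Cprod1 (m : nat) (f : nat -> C) : C :=
  match m with O => RtoC 1 | S m' => (Cprod1 m' f * f m)%C end.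

Definition Qfun (theta : R) (m : nat) (omega : nat -> C) (v : C) : C :=
  Cprod1 m (fun k => Csinh (RtoC (theta / 2) * (v - omega k))%C).

Definition phifun (theta : R) (N : nat) (v : C) : C :=
  Cpow (Csinh (RtoC (theta / 2) * v)%C / RtoC (sin theta))%C (N / 2).

Definition BAE (theta : R) (N : nat) (u : C) (m : nat) (omega : nat -> C) : Prop :=
  forall j : nat, (1 <= j <= m)%nat ->
    (- Cpow
        ((Csinh (RtoC (theta/2) * (omega j + Ci * (u + 2)))
          * Csinh (RtoC (theta/2) * (omega j - Ci * u)))
         / (Csinh (RtoC (theta/2) * (omega j - Ci * (u + 2)))
          * Csinh (RtoC (theta/2) * (omega j + Ci * u)))) (N / 2))%C
    = (Qfun theta m omega (omega j + 2 * Ci) / Qfun theta m omega (omega j - 2 * Ci))%C.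

(* Tfun n v  is  T_{n-1}(v) (dressed vacuum form); Tfun 0 = T_{-1} = 0. *)
Definition Tfun (theta : R) (N : nat) (u : C) (m : nat) (omega : nat -> C)
    (n : nat) (v : C) : C :=
  let Q := Qfun theta m omega in
  let phi := phifun theta N in
  let nC := RtoC (INR n) in
  Csum1 n (fun j =>
    let jC := RtoC (INR j) in
    (phi (v - Ci * (u + nC + 2 - 2 * jC)) * phi (v + Ci * (u - nC + 2 * jC))
     * (Q (v + Ci * nC) * Q (v - Ci * nC))
     / (Q (v + Ci * (2 * jC - nC)) * Q (v + Ci * (2 * jC - nC - 2))))%C).

Definition Tdefined (theta : R) (m : nat) (omega : nat -> C) (n : nat) (v : C) : Prop :=
  let Q := Qfun theta m omega in
  let nC := RtoC (INR n) in
  forall j : nat, (1 <= j <= n)%nat ->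
    let jC := RtoC (INR j) in
    Q (v + Ci * (2 * jC - nC))%C <> RtoC 0 /\ Q (v + Ci * (2 * jC - nC - 2))%C <> RtoC 0.

(* Main.v *)
Require Import Defs.
From Stdlib Require Import Reals Arith.
From Coquelicot Require Import Coquelicot.
From Stdlib Require Import Lra Lia.
Open Scope R_scope.

Ltac ceq := apply injective_projections; simpl; ring.

Lemma Csum1_ext (n : nat) (f g : nat -> C) :
  (forall j, (1 <= j <= n)%nat -> f j = g j) -> Csum1 n f = Csum1 n g.
Proof.
  induction n; intros H; simpl; auto.
  rewrite IHn by (intros; apply H; lia). rewrite H by lia. reflexivity.
Qed.

Lemma Csum1_scal (n : nat) (c : C) (g : nat -> C) :
  Csum1 n (fun j => c * g j)%C = (c * Csum1 n g)%C.
Proof. induction n; simpl. ring. rewrite IHn. ring. Qed.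

Lemma Csum1_split (f : R -> C) (c : R) (a b : nat) :
  Csum1 (a + b) (fun j => f (c + 2 * INR j)) =
  (Csum1 a (fun j => f (c + 2 * INR j)%R) + Csum1 b (fun j => f ((c + 2 * INR a) + 2 * INR j)%R))%C.
Proof.
  induction b.
  - rewrite Nat.add_0_r. simpl. ring.
  - rewrite Nat.add_succ_r. cbn [Csum1]. rewrite IHb.
    replace (c + 2 * INR (S (a + b))) with (c + 2 * INR a + 2 * INR (S b)).
    ring. rewrite !S_INR, plus_INR. ring.
Qed.

Definition Pt (v : C) (s : R) : C := (v + Ci * RtoC s)%C.

Definition hfun (theta : R) (N : nat) (u : C) (m : nat) (omega : nat -> C) (v : C) (t : R) : C :=
  (phifun theta N (Pt v (t - 2)%R - Ci * u) * phifun theta N (Pt v t + Ci * u)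
   * / (Qfun theta m omega (Pt v t) * Qfun theta m omega (Pt v (t - 2)%R)))%C.

Lemma T_form theta N u m omega v (n : nat) (s : R) :
  Tfun theta N u m omega n (Pt v s) =
  (Qfun theta m omega (Pt v (s + INR n)%R%R) * Qfun theta m omega (Pt v (s - INR n)%R%R)
   * Csum1 n (fun j => hfun theta N u m omega v (s - INR n + 2 * INR j)%R))%C.
Proof.
  unfold Tfun. rewrite <- Csum1_scal. apply Csum1_ext. intros j _.
  unfold hfun, Cdiv.
  replace (Pt v s - Ci * (u + RtoC (INR n) + 2 - 2 * RtoC (INR j)))%C
    with (Pt v (s - INR n + 2 * INR j - 2)%R - Ci * u)%C by (unfold Pt; ceq).
  replace (Pt v s + Ci * (u - RtoC (INR n) + 2 * RtoC (INR j)))%C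
    with (Pt v (s - INR n + 2 * INR j)%R + Ci * u)%C by (unfold Pt; ceq).
  replace (Pt v s + Ci * RtoC (INR n))%C with (Pt v (s + INR n)%R) by (unfold Pt; ceq).
  replace (Pt v s - Ci * RtoC (INR n))%C with (Pt v (s - INR n)%R) by (unfold Pt; ceq).
  replace (Pt v s + Ci * (2 * RtoC (INR j) - RtoC (INR n)))%C with (Pt v (s - INR n + 2 * INR j)%R) by (unfold Pt; ceq).
  replace (Pt v s + Ci * (2 * RtoC (INR j) - RtoC (INR n) - 2))%C with (Pt v (s - INR n + 2 * INR j - 2)%R) by (unfold Pt; ceq).
  ring.
Qed.

Lemma Csum1_c (f : R -> C) (c1 c2 : R) (q : nat) : c1 = c2 ->
  Csum1 q (fun j => f (c1 + 2 * INR j)%R) = Csum1 q (fun j => f (c2 + 2 * INR j)%R).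
Proof. intros ->. reflexivity. Qed.

Lemma Pt_eq v s1 s2 : s1 = s2 -> Pt v s1 = Pt v s2.
Proof. intros ->. reflexivity. Qed.

Theorem mainTheorem1 (p0 : R) (N : nat) (u : C) (m : nat) (omega : nat -> C) :
  2 <= p0 ->
  (0 < N)%nat -> Nat.Even N ->
  (m <= N / 2)%nat ->
  BAE (PI / p0) N u m omega ->
  forall (n y : nat) (v : C),
    (1 <= y)%nat -> (y <= n)%nat ->
    Tdefined (PI / p0) m omega n (v + Ci * RtoC (INR y))%C ->
    Tdefined (PI / p0) m omega n (v - Ci * RtoC (INR y))%C ->
    Tdefined (PI / p0) m omega (n + y) v ->
    Tdefined (PI / p0) m omega (n - y) v ->
    Tdefined (PI / p0) m omega y (v + Ci * RtoC (INR n))%C ->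
    Tdefined (PI / p0) m omega y (v - Ci * RtoC (INR n))%C ->
    (Tfun (PI / p0) N u m omega n (v + Ci * RtoC (INR y))
     * Tfun (PI / p0) N u m omega n (v - Ci * RtoC (INR y)))%C
    = (Tfun (PI / p0) N u m omega (n + y) v * Tfun (PI / p0) N u m omega (n - y) v
       + Tfun (PI / p0) N u m omega y (v + Ci * RtoC (INR n))
         * Tfun (PI / p0) N u m omega y (v - Ci * RtoC (INR n)))%C.
Proof.
  intros _ _ _ _ _ n y v Hy Hyn _ _ _ _ _ _.
  change (v + Ci * RtoC (INR y))%C with (Pt v (INR y)).
  change (v + Ci * RtoC (INR n))%C with (Pt v (INR n)).
  replace (v - Ci * RtoC (INR y))%C with (Pt v (- INR y)) by (unfold Pt; ceq).
  replace (v - Ci * RtoC (INR n))%C with (Pt v (- INR n)) by (unfold Pt; ceq).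
  replace (Tfun (PI / p0) N u m omega (n + y) v) with (Tfun (PI / p0) N u m omega (n + y) (Pt v 0)) by (f_equal; unfold Pt; ceq).
  replace (Tfun (PI / p0) N u m omega (n - y) v) with (Tfun (PI / p0) N u m omega (n - y) (Pt v 0)) by (f_equal; unfold Pt; ceq).
  rewrite !T_form.
  set (h := hfun (PI / p0) N u m omega v).
  set (Q := fun s => Qfun (PI / p0) m omega (Pt v s)).
  change (Qfun (PI / p0) m omega (Pt v ?s)) with (Q s).
  rewrite plus_INR, minus_INR by exact Hyn.
  set (D := Csum1 (n - y) (fun j => h (INR y - INR n + 2 * INR j)%R)).
  set (E := Csum1 y (fun j => h (INR n - INR y + 2 * INR j)%R)).
  set (F := Csum1 y (fun j => h (- INR n - INR y + 2 * INR j)%R)).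
  assert (SA : Csum1 n (fun j => h (INR y - INR n + 2 * INR j)%R) = (D + E)%C).
  { transitivity (Csum1 (n - y + y) (fun j => h (INR y - INR n + 2 * INR j)%R)).
    { f_equal. lia. }
    rewrite Csum1_split. f_equal. apply Csum1_c. rewrite minus_INR by lia. ring. }
  assert (SB : Csum1 n (fun j => h (- INR y - INR n + 2 * INR j)%R) = (F + D)%C).
  { transitivity (Csum1 (y + (n - y)) (fun j => h (- INR y - INR n + 2 * INR j)%R)).
    { f_equal. lia. }
    rewrite Csum1_split. f_equal.
    - apply Csum1_c. ring.
    - apply Csum1_c. ring. }
  assert (SC : Csum1 (n + y) (fun j => h (0 - (INR n + INR y) + 2 * INR j)%R) = (F + D + E)%C).
  { transitivity (Csum1 (y + (n - y) + y) (fun j => h (0 - (INR n + INR y) + 2 * INR j)%R)).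
    { f_equal. lia. }
    rewrite !Csum1_split. f_equal; [f_equal|].
    - apply Csum1_c. ring.
    - apply Csum1_c. ring.
    - apply Csum1_c. rewrite plus_INR, minus_INR by lia. ring. }
  assert (SD : Csum1 (n - y) (fun j => h (0 - (INR n - INR y) + 2 * INR j)%R) = D).
  { apply Csum1_c. ring. }
  rewrite SA, SB, SC, SD.
  replace (INR y + INR n) with (INR n + INR y) by ring.
  replace (- INR y + INR n) with (INR n - INR y) by ring.
  replace (- INR y - INR n) with (- INR n - INR y) by ring.
  replace (0 + (INR n + INR y)) with (INR n + INR y) by ring.
  replace (0 - (INR n + INR y)) with (- INR n - INR y) by ring.
  replace (0 + (INR n - INR y)) with (INR n - INR y) by ring.
  replace (0 - (INR n - INR y)) with (INR y - INR n) by ring.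
  replace (- INR n + INR y) with (INR y - INR n) by ring.
  ring.
Qed.
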